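(* Let $b\in\mathbb{Z}^+$ be odd. Then for all complex $q$ with $|q|<1$, $$\sum_{n=0}^{\infty}N(3,5,4b;8n+9)q^n=4q^{\frac{b-1}2}\varphi(q^6)\psi(q^5)\psi(q^{4b})+4q\varphi(q^{2b})\psi(q^5)\psi(q^{12}).$$
   Context: $\mathbb{Z}^+$ is the set of positive integers. For $a,b,c\in\mathbb{Z}^+$ and nonnegative integer $n$, $N(a,b,c;n)$ denotes the number of triples $(x,y,z)\in\mathbb{Z}^3$ with $n=ax^2+by^2+cz^2$. Ramanujan's theta functions are $\varphi(q)=\sum_{n=-\infty}^{\infty}q^{n^2}$ and $\psi(q)=\sum_{n=0}^{\infty}q^{n(n+1)/2}$ for $|q|<1$. *)

(* Defs.v *)
From Stdlib Require Import Reals ZArith List.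
From Coquelicot Require Import Coquelicot.

Definition zrange (n : nat) : list Z :=
  map (fun k => (Z.of_nat k - Z.of_nat n)%Z) (seq 0 (2 * n + 1)).

(* N(a,b,c;n) = #{(x,y,z) in Z^3 : n = a x^2 + b y^2 + c z^2}, for a,b,c >= 1.
   Every solution has |x|,|y|,|z| <= x^2 <= n, so it suffices to count
   solutions in the box [-n,n]^3. *)
Definition Nrep (a b c : Z) (n : nat) : nat :=
  list_sum (map (fun x => list_sum (map (fun y => list_sum (map (fun z =>
     if Z.eqb (a*x*x + b*y*y + c*z*z)%Z (Z.of_nat n) then 1%nat else 0%nat)
     (zrange n))) (zrange n))) (zrange n)).

Definition CSeries (u : nat -> C) : C :=
  (Series (fun n => fst (u n)), Series (fun n => snd (u n))).

(* Bilateral sum over Z, summed symmetrically: term 0, then f n + f (-n). *)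
Definition zsym (f : Z -> C) (n : nat) : C :=
  match n with
  | O => f 0%Z
  | S _ => Cplus (f (Z.of_nat n)) (f (- Z.of_nat n)%Z)
  end.

Definition rphi (q : C) : C :=
  CSeries (zsym (fun m => Cpow q (Z.to_nat (m * m)))).
Definition rpsi (q : C) : C :=
  CSeries (fun n => Cpow q (n * (n + 1) / 2)).

(* Main.v *)
Require Import Defs.
From Stdlib Require Import Reals ZArith List Permutation Lia Lra Classical.
From Coquelicot Require Import Coquelicot.
Import ListNotations.

Module P_B1.
Local Open Scope nat_scope.

Definition sumL {T} (L : list T) (f : T -> nat) : nat := list_sum (map f L).

Lemma sumL_nil {T} (f : T -> nat) : sumL [] f = 0.
Proof. reflexivity. Qed.
Lemma sumL_cons {T} (x : T) L f : sumL (x :: L) f = f x + sumL L f.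
Proof. reflexivity. Qed.
Lemma sumL_app {T} (L M : list T) f : sumL (L ++ M) f = sumL L f + sumL M f.
Proof. unfold sumL. rewrite map_app, list_sum_app. reflexivity. Qed.

Lemma sumL_ext {T} (L : list T) f g : (forall x, In x L -> f x = g x) -> sumL L f = sumL L g.
Proof.
  induction L as [|a L IH]; intro H; [reflexivity|].
  rewrite !sumL_cons. rewrite H by (left; auto). rewrite IH; auto. intros; apply H; right; auto.
Qed.

Lemma sumL_zero {T} (L : list T) f : (forall x, In x L -> f x = 0) -> sumL L f = 0.
Proof.
  induction L as [|a L IH]; intro H; [reflexivity|].
  rewrite !sumL_cons. rewrite H by (left; auto). rewrite IH; auto. intros; apply H; right; auto.
Qed.

Lemma sumL_perm {T} (L L' : list T) f : Permutation L L' -> sumL L f = sumL L' f.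
Proof.
  intro P. induction P; simpl; unfold sumL in *; simpl; lia.
Qed.

Lemma sumL_filter {T} (L : list T) f :
  sumL L f = sumL (filter (fun x => negb (Nat.eqb (f x) 0)) L) f.
Proof.
  induction L as [|a L IH]; [reflexivity|]. simpl.
  destruct (Nat.eqb (f a) 0) eqn:E; simpl; rewrite !sumL_cons, IH; auto.
  apply Nat.eqb_eq in E. lia.
Qed.

Lemma sumL_box {T} (L L' : list T) f : NoDup L -> NoDup L' ->
  (forall x, f x <> 0 -> (In x L <-> In x L')) -> sumL L f = sumL L' f.
Proof.
  intros N N' H. rewrite (sumL_filter L), (sumL_filter L'). apply sumL_perm.
  apply NoDup_Permutation; try apply NoDup_filter; auto.
  intro x. rewrite !filter_In. destruct (Nat.eqb (f x) 0) eqn:E; simpl.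
  - split; intros [_ C]; discriminate.
  - apply Nat.eqb_neq in E. rewrite (H x E). tauto.
Qed.

Lemma sumL_map {T U} (g : T -> U) L f : sumL (map g L) f = sumL L (fun x => f (g x)).
Proof. unfold sumL. rewrite map_map. reflexivity. Qed.

Lemma sumL_add {T} (L : list T) f g : sumL L (fun x => f x + g x) = sumL L f + sumL L g.
Proof. induction L as [|a L IH]; [reflexivity|]. rewrite !sumL_cons, IH. lia. Qed.

Lemma sumL_mult_l {T} (L : list T) c f : c * sumL L f = sumL L (fun x => c * f x).
Proof. induction L as [|a L IH]; [rewrite !sumL_nil; lia|]. rewrite !sumL_cons, <- IH. lia. Qed.

Lemma sumL_swap {T U} (L : list T) (M : list U) f :
  sumL L (fun x => sumL M (f x)) = sumL M (fun y => sumL L (fun x => f x y)).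
Proof.
  induction L as [|a L IH].
  - rewrite sumL_nil. symmetry. apply sumL_zero. reflexivity.
  - rewrite sumL_cons, IH. rewrite <- sumL_add. apply sumL_ext. intros. rewrite sumL_cons. reflexivity.
Qed.

Lemma sumL_prod {T U} (L : list T) (M : list U) f :
  sumL (list_prod L M) f = sumL L (fun x => sumL M (fun y => f (x, y))).
Proof.
  induction L as [|a L IH]; [reflexivity|]. simpl. rewrite sumL_app, sumL_cons, IH, sumL_map. reflexivity.
Qed.

Lemma NoDup_list_prod {T U} (L : list T) (M : list U) : NoDup L -> NoDup M -> NoDup (list_prod L M).
Proof.
  intros NL NM. induction NL as [|a L Ha NL IH]; simpl; [constructor|].
  apply NoDup_app; auto.
  - apply FinFun.Injective_map_NoDup; auto. intros y y' E. inversion E; auto.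
  - intros [x y] H1 H2. apply in_map_iff in H1 as [y' [E _]]. inversion E; subst.
    apply in_prod_iff in H2 as [H2 _]. auto.
Qed.

Lemma sumL_single {T} (L : list T) f a : NoDup L -> In a L -> (forall x, f x <> 0 -> x = a) -> sumL L f = f a.
Proof.
  intros N Ha H. transitivity (sumL [a] f).
  - apply sumL_box; auto.
    + repeat constructor. simpl; tauto.
    + intros x Hx. specialize (H x Hx). subst. simpl. tauto.
  - rewrite sumL_cons, sumL_nil. lia.
Qed.

Lemma sumL_le {T} (L : list T) f g : (forall x, In x L -> f x <= g x) -> sumL L f <= sumL L g.
Proof.
  induction L as [|a L IH]; intro H; [rewrite !sumL_nil; lia|].
  rewrite !sumL_cons. specialize (H a (or_introl eq_refl)) as H1.
  assert (sumL L f <= sumL L g) by (apply IH; intros; apply H; right; auto). lia.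
Qed.

Lemma sumL_reindex {T U} (L : list T) (M : list U) (g : T -> U) (f : U -> nat) :
  NoDup L -> NoDup M ->
  (forall x y, In x L -> In y L -> g x = g y -> x = y) ->
  (forall x, In x L -> f (g x) <> 0 -> In (g x) M) ->
  (forall y, In y M -> f y <> 0 -> exists x, In x L /\ g x = y) ->
  sumL L (fun x => f (g x)) = sumL M f.
Proof.
  intros NL NM Inj H1 H2. rewrite <- sumL_map. apply sumL_box; auto.
  - apply FinFun.Injective_map_NoDup_in; auto.
  - intros y Hy. split.
    + intro Hin. apply in_map_iff in Hin as [x [E Hx]]. subst. auto.
    + intro Hin. destruct (H2 y Hin Hy) as [x [Hx E]]. subst. apply in_map; auto.
Qed.

Lemma zrange_NoDup n : NoDup (zrange n).
Proof.
  apply FinFun.Injective_map_NoDup; [|apply seq_NoDup]. intros a b E. lia.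
Qed.

Lemma in_zrange n u : In u (zrange n) <-> (- Z.of_nat n <= u <= Z.of_nat n)%Z.
Proof.
  unfold zrange. rewrite in_map_iff. split.
  - intros [k [E Hk]]. apply in_seq in Hk. lia.
  - intro H. exists (Z.to_nat (u + Z.of_nat n)). rewrite in_seq. lia.
Qed.

End P_B1.
Import P_B1.

Module P_B2.
Local Open Scope nat_scope.

Definition ind (b : bool) : nat := if b then 1 else 0.

Definition convN (a b : nat -> nat) (n : nat) : nat :=
  list_sum (map (fun k => (a k * b (n - k))%nat) (seq 0 (S n))).

Lemma sumL_mult_r {T} (L : list T) c f : sumL L f * c = sumL L (fun x => f x * c).
Proof. rewrite Nat.mul_comm, sumL_mult_l. apply sumL_ext. intros; lia. Qed.

Lemma inner_sum (x y m : nat) :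
  sumL (seq 0 (S m)) (fun k => ind (Nat.eqb x k) * ind (Nat.eqb y (m - k))) = ind (Nat.eqb (x + y) m).
Proof.
  destruct (le_lt_dec x m) as [H|H].
  - rewrite (sumL_single _ _ x).
    + rewrite Nat.eqb_refl. unfold ind at 1. rewrite Nat.mul_1_l.
      unfold ind. destruct (Nat.eqb y (m - x)) eqn:E1, (Nat.eqb (x + y) m) eqn:E2; auto.
      * apply Nat.eqb_eq in E1. apply Nat.eqb_neq in E2. lia.
      * apply Nat.eqb_neq in E1. apply Nat.eqb_eq in E2. lia.
    + apply seq_NoDup.
    + apply in_seq. lia.
    + intros k Hk. unfold ind in Hk. destruct (Nat.eqb x k) eqn:E; [|simpl in Hk; lia].
      apply Nat.eqb_eq in E. auto.
  - rewrite sumL_zero.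
    + unfold ind. destruct (Nat.eqb (x + y) m) eqn:E; auto. apply Nat.eqb_eq in E. lia.
    + intros k Hk. apply in_seq in Hk. unfold ind. destruct (Nat.eqb x k) eqn:E; auto.
      apply Nat.eqb_eq in E. lia.
Qed.

Lemma convN_repr {A B} (a b : nat -> nat) (La : list A) (Lb : list B) Ea Eb n :
  (forall i, i <= n -> a i = sumL La (fun t => ind (Nat.eqb (Ea t) i))) ->
  (forall i, i <= n -> b i = sumL Lb (fun t => ind (Nat.eqb (Eb t) i))) ->
  forall m, m <= n -> convN a b m = sumL (list_prod La Lb) (fun p => ind (Nat.eqb (Ea (fst p) + Eb (snd p)) m)).
Proof.
  intros Ha Hb m Hm. change (convN a b m) with (sumL (seq 0 (S m)) (fun k => a k * b (m - k))).
  rewrite (sumL_ext _ _ (fun k => sumL La (fun t => sumL Lb (fun s => ind (Nat.eqb (Ea t) k) * ind (Nat.eqb (Eb s) (m - k)))))).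
  - rewrite sumL_swap. rewrite sumL_prod. apply sumL_ext. intros t _.
    rewrite sumL_swap. apply sumL_ext. intros s _. apply inner_sum.
  - intros k Hk. apply in_seq in Hk. rewrite Ha, Hb by lia.
    rewrite sumL_mult_r. apply sumL_ext. intros t _. rewrite sumL_mult_l. reflexivity.
Qed.

End P_B2.
Import P_B2.

Module P_A1.

Lemma sum_n_fst (u : nat -> C) N : fst (sum_n u N) = sum_n (fun n => fst (u n)) N.
Proof.
  induction N as [|N IH].
  - rewrite !sum_O. reflexivity.
  - rewrite !sum_Sn. rewrite <- IH. reflexivity.
Qed.
Lemma sum_n_snd (u : nat -> C) N : snd (sum_n u N) = sum_n (fun n => snd (u n)) N.
Proof.
  induction N as [|N IH].
  - rewrite !sum_O. reflexivity.
  - rewrite !sum_Sn. rewrite <- IH. reflexivity.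
Qed.

Lemma is_series_C_split (u : nat -> C) (l : C) :
  is_series u l <-> (is_series (fun n => fst (u n)) (fst l) /\ is_series (fun n => snd (u n)) (snd l)).
Proof.
  unfold is_series. split.
  - intro H. pose proof (proj1 (@filterlim_locally nat _ eventually _ _ _) H) as H'; clear H; rename H' into H.
    split; apply (proj2 (@filterlim_locally nat _ eventually _ _ _)); intro eps; specialize (H eps).
    + generalize H. apply filter_imp. intros N [H1 H2]. simpl in *.
      rewrite <- sum_n_fst. exact H1.
    + generalize H. apply filter_imp. intros N [H1 H2]. simpl in *.
      rewrite <- sum_n_snd. exact H2.
  - intros [H1 H2]. apply (proj2 (@filterlim_locally nat _ eventually _ _ _)). intro eps.
    pose proof (proj1 (@filterlim_locally nat _ eventually _ _ _) H1) as H1'; clear H1; rename H1' into H1.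
    pose proof (proj1 (@filterlim_locally nat _ eventually _ _ _) H2) as H2'; clear H2; rename H2' into H2.
    generalize (filter_and _ _ (H1 eps) (H2 eps)). apply filter_imp.
    intros N [G1 G2]. split.
    + change (ball (fst l) eps (fst (sum_n u N))). rewrite sum_n_fst. exact G1.
    + change (ball (snd l) eps (snd (sum_n u N))). rewrite sum_n_snd. exact G2.
Qed.

Definition CSeries' (u : nat -> C) : C :=
  (Series (fun n => fst (u n)), Series (fun n => snd (u n))).

Lemma CSeries_is (u : nat -> C) (l : C) : is_series u l -> CSeries' u = l.
Proof.
  intro H. apply is_series_C_split in H as [H1 H2]. unfold CSeries'.
  rewrite (is_series_unique _ _ H1), (is_series_unique _ _ H2). destruct l; reflexivity.
Qed.

End P_A1.
Import P_A1.

Module P_A2.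

Lemma ex_abs_fst (u : nat -> C) : ex_series (fun n => Cmod (u n)) -> ex_series (fun n => Rabs (fst (u n))).
Proof.
  intro H. apply (@ex_series_le R_AbsRing R_CompleteNormedModule _ (fun n => Cmod (u n))); [|exact H]. intro n.
  unfold norm; simpl. unfold abs; simpl. rewrite Rabs_Rabsolu. apply re_le_Cmod.
Qed.
Lemma ex_abs_snd (u : nat -> C) : ex_series (fun n => Cmod (u n)) -> ex_series (fun n => Rabs (snd (u n))).
Proof.
  intro H. apply (@ex_series_le R_AbsRing R_CompleteNormedModule _ (fun n => Cmod (u n))); [|exact H]. intro n.
  unfold norm; simpl. unfold abs; simpl. rewrite Rabs_Rabsolu.
  pose proof (Rmax_Cmod (u n)). pose proof (Rmax_r (Rabs (fst (u n))) (Rabs (snd (u n)))). lra.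
Qed.

Lemma CauchyC (u v : nat -> C) U V :
  is_series u U -> is_series v V ->
  ex_series (fun n => Cmod (u n)) -> ex_series (fun n => Cmod (v n)) ->
  is_series (fun n => sum_n (fun k => Cmult (u k) (v (n - k)%nat)) n) (Cmult U V).
Proof.
  intros HU HV AU AV.
  apply is_series_C_split in HU as [HU1 HU2].
  apply is_series_C_split in HV as [HV1 HV2].
  pose proof (ex_abs_fst _ AU) as AU1. pose proof (ex_abs_snd _ AU) as AU2.
  pose proof (ex_abs_fst _ AV) as AV1. pose proof (ex_abs_snd _ AV) as AV2.
  pose proof (is_series_mult _ _ _ _ HU1 HV1 AU1 AV1) as P11.
  pose proof (is_series_mult _ _ _ _ HU1 HV2 AU1 AV2) as P12.
  pose proof (is_series_mult _ _ _ _ HU2 HV1 AU2 AV1) as P21.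
  pose proof (is_series_mult _ _ _ _ HU2 HV2 AU2 AV2) as P22.
  apply is_series_C_split. split.
  - eapply is_series_ext; [|apply (is_series_minus _ _ _ _ P11 P22)].
    intro n. rewrite sum_n_fst, sum_n_Reals. unfold minus, plus, opp; simpl.
    rewrite minus_sum. ring.
  - replace (snd (U * V)%C) with (fst U * snd V + snd U * fst V) by (simpl; ring).
    eapply is_series_ext; [|apply (is_series_plus _ _ _ _ P12 P21)].
    intro n. rewrite sum_n_snd, sum_n_Reals. unfold plus; simpl.
    rewrite <- plus_sum. apply sum_eq. intros i _. simpl. ring.
Qed.

End P_A2.
Import P_A2.

Module P_A3.

Definition term (d : nat -> nat) (q : C) (n : nat) : C := Cmult (RtoC (INR (d n))) (Cpow q n).
Definition PSer (d : nat -> nat) (q : C) (L : C) : Prop :=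
  is_series (term d q) L /\ ex_series (fun n => INR (d n) * Cmod q ^ n).

Lemma Cmod_term d q n : Cmod (term d q n) = INR (d n) * Cmod q ^ n.
Proof. unfold term. rewrite Cmod_mult, Cmod_R, Cmod_pow, Rabs_pos_eq; auto using pos_INR. Qed.

Lemma PSer_ext d d' q L : (forall n, d n = d' n) -> PSer d q L -> PSer d' q L.
Proof.
  intros E [H1 H2]. split.
  - eapply is_series_ext; [|exact H1]. intro n. unfold term. rewrite E. reflexivity.
  - eapply ex_series_ext; [|exact H2]. intro n. simpl. rewrite E. reflexivity.
Qed.


Lemma INR_list_sum_seq (f : nat -> nat) n :
  INR (list_sum (map f (seq 0 (S n)))) = sum_f_R0 (fun k => INR (f k)) n.
Proof.
  induction n as [|n IH].
  - simpl. rewrite Nat.add_0_r. reflexivity.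
  - rewrite seq_S, map_app, list_sum_app, plus_INR, IH. simpl. rewrite Nat.add_0_r. reflexivity.
Qed.

Lemma INR_convN a b n :
  INR (convN a b n) = sum_f_R0 (fun k => INR (a k) * INR (b (n - k)%nat)) n.
Proof.
  unfold convN. rewrite INR_list_sum_seq. apply sum_eq. intros. apply mult_INR.
Qed.

Lemma sum_n_RtoC_mult (g : nat -> R) (z : C) n :
  sum_n (fun k => Cmult (RtoC (g k)) z) n = Cmult (RtoC (sum_f_R0 g n)) z.
Proof.
  induction n as [|n IH].
  - rewrite sum_O. reflexivity.
  - rewrite sum_Sn, IH. simpl sum_f_R0. change plus with Cplus. rewrite RtoC_plus. symmetry; apply Cmult_plus_distr_r.
Qed.

Lemma Cring4 (a b c d : C) : (a*c*(b*d) = (a*b)*(c*d))%C. Proof. ring. Qed.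

Lemma PSer_mult a b q A B : PSer a q A -> PSer b q B -> PSer (convN a b) q (Cmult A B).
Proof.
  intros [HA AA] [HB AB]. split.
  - assert (AA' : ex_series (fun n => Cmod (term a q n))).
    { eapply ex_series_ext; [|exact AA]. intro n. simpl. rewrite Cmod_term. reflexivity. }
    assert (AB' : ex_series (fun n => Cmod (term b q n))).
    { eapply ex_series_ext; [|exact AB]. intro n. simpl. rewrite Cmod_term. reflexivity. }
    eapply is_series_ext; [|exact (CauchyC _ _ _ _ HA HB AA' AB')].
    intro n. simpl.
    rewrite (sum_n_ext_loc _ (fun k => Cmult (RtoC (INR (a k) * INR (b (n - k)%nat))) (Cpow q n))).
    + rewrite sum_n_RtoC_mult. unfold term. rewrite INR_convN. reflexivity.
    + intros k Hk. unfold term. rewrite RtoC_mult.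
      replace (Cpow q n) with (Cpow q k * Cpow q (n - k))%C by (rewrite <- Cpow_add_r; f_equal; lia). exact (Cring4 _ _ _ _).
  - destruct AA as [la Ha]. destruct AB as [lb Hb].
    assert (Pa : forall n, 0 <= INR (a n) * Cmod q ^ n).
    { intro n. apply Rmult_le_pos; [apply pos_INR|apply pow_le, Cmod_ge_0]. }
    assert (Pb : forall n, 0 <= INR (b n) * Cmod q ^ n).
    { intro n. apply Rmult_le_pos; [apply pos_INR|apply pow_le, Cmod_ge_0]. }
    assert (Ea : ex_series (fun n => Rabs (INR (a n) * Cmod q ^ n))).
    { exists la. eapply is_series_ext; [|exact Ha]. intro n. rewrite Rabs_pos_eq; auto. }
    assert (Eb : ex_series (fun n => Rabs (INR (b n) * Cmod q ^ n))).
    { exists lb. eapply is_series_ext; [|exact Hb]. intro n. rewrite Rabs_pos_eq; auto. }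
    eexists. eapply is_series_ext; [|exact (is_series_mult _ _ _ _ Ha Hb Ea Eb)].
    intro n. simpl. rewrite INR_convN.
    rewrite (Rmult_comm _ (Cmod q ^ n)), scal_sum. apply sum_eq. intros k Hk.
    replace (Cmod q ^ n) with (Cmod q ^ k * Cmod q ^ (n-k)) by (rewrite <- pow_add; f_equal; lia). ring.
Qed.

End P_A3.
Import P_A3.

Module P_A4.

Definition shiftN (s : nat) (d : nat -> nat) (n : nat) : nat :=
  if Nat.leb s n then d (n - s)%nat else 0%nat.

Lemma Cmul0 (z : C) : Cmult (RtoC 0) z = RtoC 0. Proof. ring. Qed.

Lemma PSer_shift1 d q A : PSer d q A -> PSer (shiftN 1 d) q (Cmult q A).
Proof.
  intros [H1 H2]. split.
  - apply is_series_decr_1.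
    assert (Hs : is_series (fun k => term (shiftN 1 d) q (S k)) (scal q A)).
    { eapply is_series_ext; [|apply (is_series_scal q _ _ H1)].
      intro n. unfold term, shiftN. simpl. rewrite Nat.sub_0_r.
      unfold scal; simpl; change mult with Cmult. ring. }
    enough (E : @plus C_NormedModule (q * A)%C (@opp C_NormedModule (term (shiftN 1 d) q 0)) = scal q A) by (rewrite E; exact Hs).
    unfold term, shiftN. simpl. change plus with Cplus. change opp with Copp. unfold scal; simpl; change mult with Cmult. ring.
  - apply ex_series_incr_1. eapply ex_series_ext; [|apply (ex_series_scal (Cmod q) _ H2)].
    intro n. unfold shiftN. simpl. rewrite Nat.sub_0_r. unfold scal; simpl; unfold mult; simpl. ring.
Qed.

Lemma shiftN_S s d n : shiftN (S s) d n = shiftN 1 (shiftN s d) n.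
Proof.
  unfold shiftN. destruct n as [|n]; simpl; auto.
  rewrite Nat.sub_0_r. reflexivity.
Qed.

Lemma PSer_shift s d q A : PSer d q A -> PSer (shiftN s d) q (Cmult (Cpow q s) A).
Proof.
  intro H. induction s as [|s IH].
  - eapply PSer_ext; [|replace (Cmult (Cpow q 0) A) with A by (simpl; ring); exact H].
    intro n. unfold shiftN. simpl. rewrite Nat.sub_0_r. reflexivity.
  - eapply PSer_ext; [intro n; symmetry; apply shiftN_S|].
    replace (Cmult (Cpow q (S s)) A) with (Cmult q (Cmult (Cpow q s) A)) by (simpl; ring).
    apply PSer_shift1. exact IH.
Qed.

Lemma PSer_add a b q A B : PSer a q A -> PSer b q B -> PSer (fun n => (a n + b n)%nat) q (Cplus A B).
Proof.
  intros [HA AA] [HB AB]. split.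
  - eapply is_series_ext; [|apply (is_series_plus _ _ _ _ HA HB)].
    intro n. unfold term. rewrite plus_INR, RtoC_plus. symmetry; apply Cmult_plus_distr_r.
  - eapply ex_series_ext; [|apply (ex_series_plus _ _ AA AB)].
    intro n. rewrite plus_INR. unfold plus; simpl. ring.
Qed.

Lemma PSer_scale (c : nat) a q A : PSer a q A -> PSer (fun n => (c * a n)%nat) q (Cmult (RtoC (INR c)) A).
Proof.
  intros [HA AA]. split.
  - eapply is_series_ext; [|apply (is_series_scal (RtoC (INR c)) _ _ HA)].
    intro n. unfold term. rewrite mult_INR, RtoC_mult. unfold scal; simpl; change mult with Cmult. ring.
  - eapply ex_series_ext; [|apply (ex_series_scal (INR c) _ AA)].
    intro n. rewrite mult_INR. unfold scal; simpl; unfold mult; simpl. ring.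
Qed.

End P_A4.
Import P_A4.

Module P_A5.

Lemma strict_mono (e : nat -> nat) : (forall k, (e k < e (S k))%nat) ->
  forall i j, (i < j)%nat -> (e i < e j)%nat.
Proof.
  intros H i j Hij. induction Hij as [|j Hij IH].
  - apply H.
  - specialize (H j). lia.
Qed.

Lemma strict_mono_le (e : nat -> nat) : (forall k, (e k < e (S k))%nat) ->
  forall i j, (i <= j)%nat -> (e i <= e j)%nat.
Proof.
  intros H i j Hij. destruct (Nat.eq_dec i j); [subst; lia|].
  pose proof (strict_mono e H i j). lia.
Qed.

Lemma sparse_dense (e w d : nat -> nat) (q : C) (M : nat) :
  e 0%nat = 0%nat -> (forall k, (e k < e (S k))%nat) ->
  (forall k, d (e k) = w k) -> (forall n, (forall k, e k <> n) -> d n = 0%nat) ->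
  (forall k, (w k <= M)%nat) -> Cmod q < 1 ->
  exists L, PSer d q L /\ is_series (fun k => Cmult (RtoC (INR (w k))) (Cpow q (e k))) L.
Proof.
  intros e0 He Hd Hz Hw Hq.
  assert (Bd : forall n, (d n <= M)%nat).
  { intro n. destruct (classic (exists k, e k = n)) as [[k Hk]|Hn].
    - subst. rewrite Hd. apply Hw.
    - rewrite Hz; [lia|]. intros k Hk. apply Hn. exists k; auto. }
  assert (Hq0 : 0 <= Cmod q) by apply Cmod_ge_0.
  assert (G : ex_series (fun n => INR M * Cmod q ^ n)).
  { destruct (ex_series_geom (Cmod q)) as [g Hg]; [rewrite Rabs_pos_eq; auto|]. exists (INR M * g). apply (is_series_scal (K:=R_AbsRing) (INR M) _ _ Hg). }
  assert (Ab : ex_series (fun n => INR (d n) * Cmod q ^ n)).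
  { apply (@ex_series_le R_AbsRing R_CompleteNormedModule _ (fun n => INR M * Cmod q ^ n)); [|exact G]. intro n.
    unfold norm; simpl; unfold abs; simpl. rewrite Rabs_pos_eq.
    - apply Rmult_le_compat_r; [apply pow_le; auto|]. apply le_INR, Bd.
    - apply Rmult_le_pos; [apply pos_INR|apply pow_le; auto]. }
  assert (Ex : ex_series (term d q)).
  { apply (@ex_series_le C_AbsRing C_CompleteNormedModule _ (fun n => INR (d n) * Cmod q ^ n)); [|exact Ab]. intro n.
    change (Cmod (term d q n) <= INR (d n) * Cmod q ^ n). rewrite Cmod_term. lra. }
  destruct Ex as [L HL]. exists L. split; [split; auto|].
  assert (Gap : forall K m, (e K + m < e (S K))%nat ->
      sum_n (term d q) (e K + m) = sum_n (term d q) (e K)).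
  { intros K m. induction m as [|m IH]; intro Hm.
    - rewrite Nat.add_0_r. reflexivity.
    - rewrite Nat.add_succ_r, sum_Sn, IH by lia.
      rewrite <- Nat.add_succ_r. unfold term at 2. rewrite Hz.
      + simpl. change plus with Cplus. rewrite Cmul0. apply Cplus_0_r.
      + intros k Hk. destruct (le_lt_dec k K) as [H1|H1].
        * pose proof (strict_mono_le e He k K H1). lia.
        * pose proof (strict_mono_le e He (S K) k H1). lia. }
  assert (PS : forall K, sum_n (term d q) (e K) =
       sum_n (fun k => Cmult (RtoC (INR (w k))) (Cpow q (e k))) K).
  { induction K as [|K IH].
    - pose proof (Hd 0%nat) as H0. rewrite e0 in H0 |- *. rewrite !sum_O, e0. unfold term. rewrite H0. reflexivity.
    - rewrite sum_Sn, <- IH. specialize (He K).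
      replace (e (S K)) with (S (e K + (e (S K) - e K - 1))) by lia.
      rewrite sum_Sn, Gap by lia. f_equal.
      replace (S (e K + (e (S K) - e K - 1))) with (e (S K)) by lia.
      unfold term. rewrite Hd. reflexivity. }
  unfold is_series.
  eapply filterlim_ext; [intro K; apply PS|].
  apply (filterlim_comp _ _ _ e (sum_n (term d q)) eventually eventually (locally L)).
  - apply eventually_subseq. exact He.
  - exact HL.
Qed.

End P_A5.
Import P_A5.

Module P_A6.

Lemma CSeries_is2 (u : nat -> C) (l : C) : is_series u l -> CSeries u = l.
Proof. intro H. exact (CSeries_is u l H). Qed.

Definition Tn (k : nat) : nat := (k * (k + 1) / 2)%nat.

Lemma Tn_S k : Tn (S k) = (Tn k + S k)%nat.
Proof.
  unfold Tn. replace (S k * (S k + 1))%nat with (k * (k + 1) + S k * 2)%nat by lia.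
  rewrite Nat.div_add by lia. reflexivity.
Qed.

Lemma Tn_ge k : (k <= Tn k)%nat.
Proof. induction k as [|k IH]; [cbv; lia|]. rewrite Tn_S. lia. Qed.

Definition dpsi (c : nat) (n : nat) : nat :=
  sumL (seq 0 (S n)) (fun k => if Nat.eqb (c * Tn k) n then 1%nat else 0%nat).

Lemma PSer_psi (c : nat) (q : C) : (1 <= c)%nat -> Cmod q < 1 ->
  PSer (dpsi c) q (rpsi (Cpow q c)).
Proof.
  intros Hc Hq.
  set (e := fun k => (c * Tn k)%nat).
  assert (He : forall k, (e k < e (S k))%nat).
  { intro k. unfold e. rewrite Tn_S. nia. }
  destruct (sparse_dense e (fun _ => 1%nat) (dpsi c) q 1 ltac:(unfold e, Tn; simpl; lia) He) as [L [H1 H2]].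
  - intro K. unfold dpsi. rewrite (sumL_single _ _ K).
    + rewrite Nat.eqb_refl. reflexivity.
    + apply seq_NoDup.
    + apply in_seq. unfold e. pose proof (Tn_ge K). nia.
    + intros x Hx. destruct (Nat.eqb (c * Tn x) (e K)) eqn:E; [|congruence].
      apply Nat.eqb_eq in E. fold (e x) in E.
      destruct (lt_eq_lt_dec x K) as [[H|H]|H]; auto.
      * pose proof (strict_mono e He x K H). lia.
      * pose proof (strict_mono e He K x H). lia.
  - intros n Hn. unfold dpsi. apply sumL_zero. intros k _.
    destruct (Nat.eqb (c * Tn k) n) eqn:E; auto. apply Nat.eqb_eq in E. exfalso. exact (Hn k E).
  - intro; lia.
  - exact Hq.
  - replace (rpsi (Cpow q c)) with L; auto.
    unfold rpsi. symmetry. apply CSeries_is2.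
    eapply is_series_ext; [|exact H2]. intro n. change (INR 1) with 1.
    unfold e, Tn. rewrite Cpow_mult_r. apply Cmult_1_l.
Qed.

Lemma C2 (z : C) : ((RtoC 1 + RtoC 1) * z = z + z)%C. Proof. ring. Qed.

Definition dphi (c : nat) (n : nat) : nat :=
  sumL (zrange n) (fun u => if Z.eqb (Z.of_nat c * u * u) (Z.of_nat n) then 1%nat else 0%nat).

Lemma PSer_phi (c : nat) (q : C) : (1 <= c)%nat -> Cmod q < 1 ->
  PSer (dphi c) q (rphi (Cpow q c)).
Proof.
  intros Hc Hq.
  set (e := fun k => (c * (k * k))%nat).
  set (w := fun k => match k with O => 1%nat | S _ => 2%nat end).
  assert (He : forall k, (e k < e (S k))%nat).
  { intro k. unfold e. nia. }
  destruct (sparse_dense e w (dphi c) q 2 ltac:(unfold e; lia) He) as [L [H1 H2]].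
  - intro K. unfold dphi. destruct K as [|K].
    + rewrite (sumL_single _ _ 0%Z).
      * unfold w. replace (Z.of_nat (e 0%nat)) with 0%Z by (unfold e; lia). rewrite !Z.mul_0_r. reflexivity.
      * apply zrange_NoDup.
      * apply in_zrange. unfold e; lia.
      * intros x Hx. destruct (Z.eqb _ _) eqn:E; [|congruence].
        apply Z.eqb_eq in E. unfold e in E. simpl in E. nia.
    + transitivity (sumL [Z.of_nat (S K); (- Z.of_nat (S K))%Z]
         (fun u => if Z.eqb (Z.of_nat c * u * u) (Z.of_nat (e (S K))) then 1%nat else 0%nat)).
      * apply sumL_box.
        -- apply zrange_NoDup.
        -- constructor; [simpl; lia|]. constructor; [simpl; tauto|constructor].
        -- intros x Hx. destruct (Z.eqb _ _) eqn:E; [|congruence].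
           apply Z.eqb_eq in E. unfold e in E. rewrite !Nat2Z.inj_mul in E.
           assert (E2 : (x * x = Z.of_nat (S K) * Z.of_nat (S K))%Z).
           { apply (Z.mul_cancel_l _ _ (Z.of_nat c)); [lia|]. rewrite <- E. ring. }
           assert (E3 : ((x - Z.of_nat (S K)) * (x + Z.of_nat (S K)) = 0)%Z) by (replace ((x - Z.of_nat (S K)) * (x + Z.of_nat (S K)))%Z with (x * x - Z.of_nat (S K) * Z.of_nat (S K))%Z by ring; lia).
           apply Z.mul_eq_0 in E3. rewrite in_zrange. unfold e. rewrite !Nat2Z.inj_mul. simpl In. split.
           ++ intros _. destruct E3 as [E3|E3]; [left|right; left]; lia.
           ++ intros _. assert (Z.of_nat (S K) <= Z.of_nat c * (Z.of_nat (S K) * Z.of_nat (S K)))%Z by nia. lia.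
      * unfold e. rewrite !sumL_cons, sumL_nil. rewrite !Nat2Z.inj_mul.
        replace (Z.of_nat c * - Z.of_nat (S K) * - Z.of_nat (S K))%Z
          with (Z.of_nat c * (Z.of_nat (S K) * Z.of_nat (S K)))%Z by ring.
        replace (Z.of_nat c * Z.of_nat (S K) * Z.of_nat (S K))%Z
          with (Z.of_nat c * (Z.of_nat (S K) * Z.of_nat (S K)))%Z by ring.
        rewrite Z.eqb_refl. reflexivity.
  - intros n Hn. unfold dphi. apply sumL_zero. intros u _.
    destruct (Z.eqb _ _) eqn:E; auto. apply Z.eqb_eq in E. exfalso.
    apply (Hn (Z.to_nat (Z.abs u))). unfold e. apply Nat2Z.inj.
    rewrite !Nat2Z.inj_mul, Z2Nat.id by lia. rewrite <- E.
    destruct (Z.abs_spec u) as [[_ A]|[_ A]]; rewrite A; ring.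
  - intros [|k]; simpl; lia.
  - exact Hq.
  - replace (rphi (Cpow q c)) with L; auto.
    unfold rphi. symmetry. apply CSeries_is2.
    eapply is_series_ext; [|exact H2]. intros [|k].
    + simpl. unfold e. rewrite Nat.mul_0_r. simpl. apply Cmult_1_l.
    + unfold zsym, w, e.
      rewrite <- Nat2Z.inj_mul, Z.mul_opp_opp, <- Nat2Z.inj_mul, Nat2Z.id.
      rewrite Cpow_mult_r. simpl INR. rewrite RtoC_plus. apply C2.
Qed.

End P_A6.
Import P_A6.

Module P_B3.
Local Open Scope nat_scope.

Definition sgnZ (c : bool) : Z := if c then 1%Z else (-1)%Z.
Lemma sgnZ_sq c : (sgnZ c * sgnZ c = 1)%Z. Proof. destruct c; reflexivity. Qed.

Definition box (n : nat) : list (Z * nat * nat) :=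
  list_prod (list_prod (zrange n) (seq 0 (S n))) (seq 0 (S n)).

Definition XA (b : nat) (p : Z * nat * nat) : nat :=
  Z.to_nat (Z.of_nat 6 * fst (fst p) * fst (fst p)) + 5 * Tn (snd (fst p)) + 4 * b * Tn (snd p).
Definition XB (b : nat) (p : Z * nat * nat) : nat :=
  Z.to_nat (Z.of_nat (2 * b) * fst (fst p) * fst (fst p)) + 5 * Tn (snd (fst p)) + 12 * Tn (snd p).

Lemma TnZ k : (2 * Z.of_nat (Tn k) = Z.of_nat k * (Z.of_nat k + 1))%Z.
Proof.
  induction k as [|k IH]; [reflexivity|]. rewrite Tn_S. lia.
Qed.

Lemma eqb_lift a n : Nat.eqb a n = Z.eqb (8 * Z.of_nat a + 9) (Z.of_nat (8 * n + 9)).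
Proof.
  destruct (Nat.eqb a n) eqn:E1, (Z.eqb _ _) eqn:E2; auto.
  - apply Nat.eqb_eq in E1. apply Z.eqb_neq in E2. lia.
  - apply Nat.eqb_neq in E1. apply Z.eqb_eq in E2. lia.
Qed.

Lemma sq_ge (u : Z) : (Z.abs u <= u * u)%Z.
Proof. destruct (Z.abs_spec u) as [[H1 H2]|[H1 H2]]; nia. Qed.

Definition gmap (t : bool * bool * bool * (Z * nat * nat)) : Z * Z * Z :=
  match t with
  | (tg, s1, s2, (u, k, m)) =>
    if tg then ((4 * u)%Z, (sgnZ s1 * (2 * Z.of_nat k + 1))%Z, (sgnZ s2 * (2 * Z.of_nat m + 1))%Z)
    else ((2 * (sgnZ s1 * (2 * Z.of_nat m + 1)))%Z, (sgnZ s2 * (2 * Z.of_nat k + 1))%Z, (2 * u)%Z)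
  end.

Definition Gfun (b n : nat) (p : Z * Z * Z) : nat :=
  match p with
  | (x, y, z) => if Z.eqb (3 * x * x + 5 * y * y + 4 * Z.of_nat b * z * z)%Z (Z.of_nat (8 * n + 9)) then 1 else 0
  end.

Definition Ffun (b s n : nat) (t : bool * bool * bool * (Z * nat * nat)) : nat :=
  match t with
  | (tg, _, _, p) => if tg then ind (Nat.eqb (XA b p + s) n) else ind (Nat.eqb (XB b p + 1) n)
  end.

Lemma ifeqb_ext (A A' B : Z) : A = A' -> (if Z.eqb A B then 1 else 0) = (if Z.eqb A' B then 1 else 0).
Proof. intros ->. reflexivity. Qed.

Lemma F_eq_G b s n t : b = 2 * s + 1 -> Ffun b s n t = Gfun b n (gmap t).
Proof.
  intro Hb. destruct t as [[[tg s1] s2] [[u k] m]]. unfold Ffun, gmap, Gfun, ind.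
  destruct tg.
  - rewrite eqb_lift. unfold XA. simpl fst; simpl snd.
    replace (8 * Z.of_nat (Z.to_nat (Z.of_nat 6 * u * u) + 5 * Tn k + 4 * b * Tn m + s) + 9)%Z
      with (48 * (u * u) + 20 * (2 * Z.of_nat (Tn k)) + 16 * Z.of_nat b * (2 * Z.of_nat (Tn m)) + 8 * Z.of_nat s + 9)%Z.
    + rewrite !TnZ. subst b. rewrite Nat2Z.inj_add, Nat2Z.inj_mul. change (Z.of_nat 2) with 2%Z. change (Z.of_nat 1) with 1%Z.
      apply ifeqb_ext; destruct s1, s2; simpl sgnZ; ring.
    + rewrite !Nat2Z.inj_add, !Nat2Z.inj_mul, Z2Nat.id by nia. change (Z.of_nat 6) with 6%Z; change (Z.of_nat 5) with 5%Z; change (Z.of_nat 4) with 4%Z; change (Z.of_nat 12) with 12%Z; change (Z.of_nat 2) with 2%Z; change (Z.of_nat 1) with 1%Z. ring.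
  - rewrite eqb_lift. unfold XB. simpl fst; simpl snd.
    replace (8 * Z.of_nat (Z.to_nat (Z.of_nat (2 * b) * u * u) + 5 * Tn k + 12 * Tn m + 1) + 9)%Z
      with (16 * Z.of_nat b * (u * u) + 20 * (2 * Z.of_nat (Tn k)) + 48 * (2 * Z.of_nat (Tn m)) + 17)%Z.
    + rewrite !TnZ.
      apply ifeqb_ext; destruct s1, s2; simpl sgnZ; ring.
    + rewrite !Nat2Z.inj_add, !Nat2Z.inj_mul, Z2Nat.id by nia. change (Z.of_nat 6) with 6%Z; change (Z.of_nat 5) with 5%Z; change (Z.of_nat 4) with 4%Z; change (Z.of_nat 12) with 12%Z; change (Z.of_nat 2) with 2%Z; change (Z.of_nat 1) with 1%Z. ring.
Qed.

End P_B3.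
Import P_B3.

Module P_B4.
Local Open Scope Z_scope.

Lemma parity (x y z s N : Z) : 3 * x * x + 5 * y * y + 4 * (2 * s + 1) * z * z = 8 * N + 9 ->
  (exists c, y = 2 * c + 1) /\
  ((exists a d, x = 4 * a /\ z = 2 * d + 1) \/ (exists a d, x = 4 * a + 2 /\ z = 2 * d)).
Proof.
  intro H.
  pose proof (Z.div_mod x 4 ltac:(lia)) as Ex. pose proof (Z.mod_pos_bound x 4 ltac:(lia)) as Bx.
  pose proof (Z.div_mod y 4 ltac:(lia)) as Ey. pose proof (Z.mod_pos_bound y 4 ltac:(lia)) as By.
  pose proof (Z.div_mod z 2 ltac:(lia)) as Ez. pose proof (Z.mod_pos_bound z 2 ltac:(lia)) as Bz.
  set (a := x / 4) in *. set (r := x mod 4) in *.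
  set (c := y / 4) in *. set (r' := y mod 4) in *.
  set (d := z / 2) in *. set (r'' := z mod 2) in *.
  clearbody a r c r' d r''.
  assert (HK : 8 * (6*a*a + 3*a*r + 10*c*c + 5*c*r' + 2*(2*s+1)*(d*d + d*r'') + s*r''*r'') + 3*r*r + 5*r'*r' + 4*r''*r'' = 8 * N + 9).
  { rewrite <- H. rewrite Ex, Ey, Ez. ring. }
  remember (6*a*a + 3*a*r + 10*c*c + 5*c*r' + 2*(2*s+1)*(d*d + d*r'') + s*r''*r'') as K eqn:EK. clear EK.
  assert (r = 0 \/ r = 1 \/ r = 2 \/ r = 3) as Hr by lia.
  assert (r' = 0 \/ r' = 1 \/ r' = 2 \/ r' = 3) as Hr' by lia.
  assert (r'' = 0 \/ r'' = 1) as Hr'' by lia.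
  destruct Hr as [ -> | [ -> | [ -> | -> ] ] ]; destruct Hr' as [ -> | [ -> | [ -> | -> ] ] ]; destruct Hr'' as [ -> | -> ];
  try (exfalso; lia);
  (split; [first [exists (2*c); lia | exists (2*c+1); lia] |
           first [left; exists a, d; lia | right; exists a, d; lia]]).
Qed.

Lemma odd_sgn (v c : Z) : v = 2 * c + 1 -> exists sg k, v = sgnZ sg * (2 * Z.of_nat k + 1).
Proof.
  intro H. destruct (Z_le_gt_dec 0 c).
  - exists true, (Z.to_nat c). unfold sgnZ. rewrite Z2Nat.id by lia. lia.
  - exists false, (Z.to_nat (- c - 1)). unfold sgnZ. rewrite Z2Nat.id by lia. lia.
Qed.

Lemma Gfun_ne b n x y z : Gfun b n ((x, y), z) <> 0%nat ->
  3 * x * x + 5 * y * y + 4 * Z.of_nat b * z * z = Z.of_nat (8 * n + 9).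
Proof.
  unfold Gfun. destruct (Z.eqb _ _) eqn:E; [|congruence]. intros _. apply Z.eqb_eq in E. exact E.
Qed.

Lemma sumL_bool (f : bool -> nat) : sumL [true; false] f = (f true + f false)%nat.
Proof. rewrite !sumL_cons, sumL_nil. lia. Qed.

Definition Ilist (n : nat) := list_prod (list_prod (list_prod [true; false] [true; false]) [true; false]) (box n).
Definition Trip (N : nat) := list_prod (list_prod (zrange N) (zrange N)) (zrange N).

Lemma NoDup_bool : NoDup [true; false].
Proof. constructor; [simpl; intuition discriminate|]. constructor; [simpl; tauto|constructor]. Qed.

Lemma in_bool (c : bool) : In c [true; false].
Proof. destruct c; simpl; auto. Qed.

Lemma count_main (b s n : nat) : b = (2 * s + 1)%nat ->
  Nrep 3 5 (4 * Z.of_nat b) (8 * n + 9) =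
  (4 * sumL (box n) (fun p => ind (Nat.eqb (XA b p + s) n)) +
   4 * sumL (box n) (fun p => ind (Nat.eqb (XB b p + 1) n)))%nat.
Proof.
  intro Hb.
  assert (NR : Nrep 3 5 (4 * Z.of_nat b) (8 * n + 9) = sumL (Trip (8 * n + 9)) (Gfun b n)).
  { unfold Nrep, Trip. rewrite !sumL_prod. reflexivity. }
  assert (FI : sumL (Ilist n) (Ffun b s n) =
     (4 * sumL (box n) (fun p => ind (Nat.eqb (XA b p + s) n)) +
      4 * sumL (box n) (fun p => ind (Nat.eqb (XB b p + 1) n)))%nat).
  { unfold Ilist. rewrite !sumL_prod. repeat (rewrite sumL_bool; cbv beta).
    unfold Ffun. lia. }
  assert (FG : sumL (Ilist n) (Ffun b s n) = sumL (Ilist n) (fun t => Gfun b n (gmap t))).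
  { apply sumL_ext. intros t _. apply F_eq_G. exact Hb. }
  rewrite NR, <- FI, FG. symmetry. apply (sumL_reindex (Ilist n) (Trip (8 * n + 9)) gmap (Gfun b n)).
  - unfold Ilist, box. repeat apply NoDup_list_prod; auto using NoDup_bool, zrange_NoDup, seq_NoDup.
  - unfold Trip. repeat apply NoDup_list_prod; auto using zrange_NoDup.
  - intros t t' _ _ E.
    destruct t as [[[tg s1] s2] [[u k] m]], t' as [[[tg' s1'] s2'] [[u' k'] m']].
    destruct tg, tg', s1, s1', s2, s2'; cbv beta iota delta [gmap sgnZ] in E; pose proof (f_equal (fun p => fst (fst p)) E) as E1; pose proof (f_equal (fun p => snd (fst p)) E) as E2; pose proof (f_equal snd E) as E3; cbn [fst snd] in E1, E2, E3;
      first [exfalso; lia | assert (u = u') by lia; assert (k = k') by lia; assert (m = m') by lia; subst; reflexivity].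
  - intros t _ Hne. destruct (gmap t) as [[x y] z] eqn:Eg.
    apply Gfun_ne in Hne. unfold Trip. rewrite !in_prod_iff, !in_zrange.
    pose proof (sq_ge x). pose proof (sq_ge y). pose proof (sq_ge z).
    assert (0 <= Z.of_nat b * z * z) by nia. assert (0 <= x * x) by nia.
    assert (0 <= y * y) by nia. assert (z * z <= Z.of_nat b * z * z) by nia.
    rewrite Nat2Z.inj_add, Nat2Z.inj_mul in *. lia.
  - intros [[x y] z] _ Hne.
    pose proof (Gfun_ne _ _ _ _ _ Hne) as E.
    assert (E' : 3 * x * x + 5 * y * y + 4 * (2 * Z.of_nat s + 1) * z * z = 8 * Z.of_nat n + 9).
    { assert (Hb1 : Z.of_nat b = 2 * Z.of_nat s + 1) by lia. assert (Hn1 : Z.of_nat (8 * n + 9) = 8 * Z.of_nat n + 9) by lia. rewrite Hb1, Hn1 in E. exact E. }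
    destruct (parity _ _ _ _ _ E') as [[c Hy] [[a [d [Hx Hz]]]|[a [d [Hx Hz]]]]].
    + destruct (odd_sgn _ _ Hy) as [sg1 [k Hk]]. destruct (odd_sgn _ _ Hz) as [sg2 [m Hm]].
      set (t := (true, sg1, sg2, (a, k, m))).
      assert (Hg : gmap t = (x, y, z)) by (simpl; rewrite Hx, Hk, Hm; reflexivity).
      exists t. split; [|exact Hg].
      assert (HF : Ffun b s n t <> 0%nat) by (rewrite F_eq_G, Hg; auto).
      simpl in HF. unfold ind in HF. destruct (Nat.eqb _ _) eqn:EF; [|congruence].
      apply Nat.eqb_eq in EF. unfold XA in EF. cbn [fst snd] in EF.
      pose proof (Tn_ge k). pose proof (Tn_ge m). pose proof (sq_ge a).
      assert (Z.of_nat (Z.to_nat (Z.of_nat 6 * a * a)) = Z.of_nat 6 * a * a) by (apply Z2Nat.id; clear; nia).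
      assert (a * a <= Z.of_nat 6 * a * a) by (clear; nia).
      assert (Tn m <= 4 * b * Tn m)%nat by (clear - Hb; nia).
      unfold Ilist, box, t. rewrite !in_prod_iff, in_zrange, !in_seq.
      split; [split; [split|]|]; auto using in_bool; try split; try split; lia.
    + destruct (odd_sgn _ _ Hy) as [sg2 [k Hk]]. destruct (odd_sgn (2 * a + 1) a eq_refl) as [sg1 [m Hm]].
      set (t := (false, sg1, sg2, (d, k, m))).
      assert (Hg : gmap t = (x, y, z)) by (unfold t; cbv beta iota delta [gmap]; rewrite <- Hm, <- Hk, Hx, Hz; f_equal; f_equal; ring).
      exists t. split; [|exact Hg].
      assert (HF : Ffun b s n t <> 0%nat) by (rewrite F_eq_G, Hg; auto).
      simpl in HF. unfold ind in HF. destruct (Nat.eqb _ _) eqn:EF; [|congruence].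
      apply Nat.eqb_eq in EF. unfold XB in EF. cbn [fst snd] in EF.
      pose proof (Tn_ge k). pose proof (Tn_ge m). pose proof (sq_ge d).
      assert (Z.of_nat (Z.to_nat (Z.of_nat (2 * b) * d * d)) = Z.of_nat (2 * b) * d * d) by (apply Z2Nat.id; clear; nia).
      assert (d * d <= Z.of_nat (2 * b) * d * d) by (clear - Hb; nia).
      unfold Ilist, box, t. rewrite !in_prod_iff, in_zrange, !in_seq.
      split; [split; [split|]|]; auto using in_bool; try split; try split; lia.
Qed.

End P_B4.
Import P_B4.


Lemma phi_repr c N i : (1 <= c)%nat -> (i <= N)%nat ->
  dphi c i = sumL (zrange N) (fun u => ind (Nat.eqb (Z.to_nat (Z.of_nat c * u * u)) i)).
Proof.
  intros Hc Hi. unfold dphi.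
  rewrite (sumL_ext _ _ (fun u => ind (Nat.eqb (Z.to_nat (Z.of_nat c * u * u)) i))).
  - apply sumL_box; try apply zrange_NoDup.
    intros u Hu. unfold ind in Hu. destruct (Nat.eqb _ _) eqn:E; [|congruence].
    apply Nat.eqb_eq in E. rewrite !in_zrange. pose proof (sq_ge u).
    assert (Z.of_nat (Z.to_nat (Z.of_nat c * u * u)) = Z.of_nat c * u * u)%Z by (apply Z2Nat.id; nia).
    assert (u * u <= Z.of_nat c * u * u)%Z by nia.
    split; intro; lia.
  - intros u _. unfold ind.
    destruct (Z.eqb _ _) eqn:E1, (Nat.eqb _ _) eqn:E2; auto.
    + apply Z.eqb_eq in E1. apply Nat.eqb_neq in E2. lia.
    + apply Z.eqb_neq in E1. apply Nat.eqb_eq in E2.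
      assert (Z.of_nat (Z.to_nat (Z.of_nat c * u * u)) = Z.of_nat c * u * u)%Z by (apply Z2Nat.id; nia).
      lia.
Qed.

Lemma psi_repr c N i : (1 <= c)%nat -> (i <= N)%nat ->
  dpsi c i = sumL (seq 0 (S N)) (fun k => ind (Nat.eqb (c * Tn k) i)).
Proof.
  intros Hc Hi. unfold dpsi. apply sumL_box; try apply seq_NoDup.
  intros k Hk. destruct (Nat.eqb _ _) eqn:E; [|simpl in Hk; congruence].
  apply Nat.eqb_eq in E. rewrite !in_seq. pose proof (Tn_ge k). split; intro; nia.
Qed.

Lemma conv3_repr c1 c2 c3 N m : (1 <= c1)%nat -> (1 <= c2)%nat -> (1 <= c3)%nat -> (m <= N)%nat ->
  convN (convN (dphi c1) (dpsi c2)) (dpsi c3) m =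
  sumL (box N) (fun p => ind (Nat.eqb (Z.to_nat (Z.of_nat c1 * fst (fst p) * fst (fst p)) + c2 * Tn (snd (fst p)) + c3 * Tn (snd p)) m)).
Proof.
  intros H1 H2 H3 Hm. unfold box.
  apply (convN_repr _ _ _ _ (fun p => Z.to_nat (Z.of_nat c1 * fst p * fst p) + c2 * Tn (snd p))%nat (fun k => c3 * Tn k)%nat N); auto.
  - intros i Hi. apply (convN_repr _ _ _ _ (fun u => Z.to_nat (Z.of_nat c1 * u * u)) (fun k => c2 * Tn k)%nat N); auto.
    + intros j Hj. apply phi_repr; lia.
    + intros j Hj. apply psi_repr; lia.
  - intros i Hi. apply psi_repr; lia.
Qed.

Lemma shift_repr (D : nat -> nat) (X : Z * nat * nat -> nat) s n :
  (forall m, (m <= n)%nat -> D m = sumL (box n) (fun p => ind (Nat.eqb (X p) m))) ->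
  shiftN s D n = sumL (box n) (fun p => ind (Nat.eqb (X p + s) n)).
Proof.
  intro H. unfold shiftN. destruct (Nat.leb s n) eqn:E.
  - apply Nat.leb_le in E. rewrite H by lia. apply sumL_ext. intros p _. unfold ind.
    destruct (Nat.eqb (X p) (n - s)) eqn:E1, (Nat.eqb (X p + s) n) eqn:E2; auto.
    + apply Nat.eqb_eq in E1. apply Nat.eqb_neq in E2. lia.
    + apply Nat.eqb_neq in E1. apply Nat.eqb_eq in E2. lia.
  - apply Nat.leb_gt in E. symmetry. apply sumL_zero. intros p _. unfold ind.
    destruct (Nat.eqb _ _) eqn:E1; auto. apply Nat.eqb_eq in E1. lia.
Qed.

Lemma final_val (f4 qs p1 a1 b1 qq p2 a2 b2 : C) :
  Cplus (Cmult f4 (Cmult qs (Cmult (Cmult p1 a1) b1))) (Cmult f4 (Cmult qq (Cmult (Cmult p2 a2) b2))) =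
  Cplus (Cmult (Cmult (Cmult (Cmult f4 qs) p1) a1) b1) (Cmult (Cmult (Cmult (Cmult f4 qq) p2) a2) b2).
Proof. ring. Qed.

Theorem lemma6p4 (b : nat) (hb : (0 < b)%nat) (hodd : Nat.odd b = true)
  (q : C) (hq : (Cmod q < 1)%R) :
  is_series (fun n : nat =>
      Cmult (RtoC (INR (Nrep 3 5 (4 * Z.of_nat b) (8 * n + 9)))) (Cpow q n))
    (Cplus
      (Cmult (Cmult (Cmult (Cmult (RtoC 4) (Cpow q ((b - 1) / 2)))
         (rphi (Cpow q 6))) (rpsi (Cpow q 5))) (rpsi (Cpow q (4 * b))))
      (Cmult (Cmult (Cmult (Cmult (RtoC 4) q)
         (rphi (Cpow q (2 * b)))) (rpsi (Cpow q 5))) (rpsi (Cpow q 12)))).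
Proof.
  apply Nat.odd_spec in hodd. destruct hodd as [s Hs].
  assert (Hs2 : ((b - 1) / 2)%nat = s) by (subst b; rewrite Nat.add_sub, Nat.mul_comm, Nat.div_mul; lia).
  rewrite Hs2.
  pose proof (PSer_mult _ _ _ _ _ (PSer_mult _ _ _ _ _ (PSer_phi 6 q ltac:(lia) hq) (PSer_psi 5 q ltac:(lia) hq))
               (PSer_psi (4 * b) q ltac:(lia) hq)) as P1.
  pose proof (PSer_mult _ _ _ _ _ (PSer_mult _ _ _ _ _ (PSer_phi (2 * b) q ltac:(lia) hq) (PSer_psi 5 q ltac:(lia) hq))
               (PSer_psi 12 q ltac:(lia) hq)) as P2.
  apply (PSer_shift s) in P1. apply (PSer_shift 1) in P2.
  apply (PSer_scale 4) in P1. apply (PSer_scale 4) in P2.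
  destruct (PSer_add _ _ _ _ _ P1 P2) as [P _].
  replace (RtoC (INR 4)) with (RtoC 4) in P by (f_equal; simpl; ring).
  rewrite Cpow_1_r in P. rewrite final_val in P.
  eapply is_series_ext; [|exact P].
  intro n. unfold term. f_equal. f_equal.
  rewrite (count_main b s n Hs).
  rewrite (shift_repr _ (XA b) s n), (shift_repr _ (XB b) 1 n); auto.
  - intros m Hm. apply conv3_repr; lia.
  - intros m Hm. apply conv3_repr; lia.
Qed.
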